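(* Let $\Delta$ be a $d$-dimensional IP lattice simplex ($d\ge2$) of Gorenstein index $g$ with local Gorenstein indices $g_0,\dots,g_d$. Then, for a suitable ordering $v_0,\dots,v_d$ of its vertices, $\Delta\cong\Delta(P)$ for a matrix $P$ satisfying all hypotheses (i)–(iii) of the following construction with $A=A(\Delta)=(\alpha_0,\dots,\alpha_d)$, $\alpha_i=g|Q_\Delta|/q_i$: $P=[v_0\cdots v_d]$ is a $d\times(d+1)$ integer matrix, upper triangular in its first $d$ columns with entries $a_{ik}$ ($a_{ik}=0$ for $i>k$) and last column $(-b_1,\dots,-b_d)^T$, such that for all $k$: (i) $a_{kk}\ge1$ and $a_{kk}\mid\alpha_{k-1}$; (ii) $0\le a_{ik}<a_{kk}$ for $i<k$; (iii) $b_kw_d=a_{kk}w_{k-1}+\dots+a_{kd}w_{d-1}$, where $w_i=\mathrm{lcm}(\alpha_0,\dots,\alpha_d)/\alpha_i$.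
   Context: An IP lattice simplex is a full-dimensional simplex in $\mathbb{Q}^d$ with vertices in $\mathbb{Z}^d$ containing the origin in its interior. $\cong$ means equality up to $\mathrm{GL}(d,\mathbb{Z})$; $\Delta(P)$ is the convex hull of the columns of $P$. Weight system $Q_\Delta=(q_0,\dots,q_d)$, $q_i=|\det(v_j:j\ne i)|$, $|Q_\Delta|=\sum q_i$. Dual $\Delta^*=\{u:\langle u,v\rangle\ge-1\ \forall v\in\Delta\}$; the $k$-th local Gorenstein index is the least $g_k\ge1$ with $g_ku_k\in\mathbb{Z}^d$ for the vertex $u_k$ of $\Delta^*$ with $\langle u_k,v_j\rangle=-1$ ($j\ne k$); the Gorenstein index is $\mathrm{lcm}(g_0,\dots,g_d)$. The tuple $A(\Delta)$ consists of positive integers with $\sum1/\alpha_i=1/g$. *)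

(* Defs.v *)
From HB Require Import structures.
From mathcomp Require Import all_boot all_order fingroup perm all_algebra.
Set Implicit Arguments. Unset Strict Implicit. Unset Printing Implicit Defensive.
Import Order.TTheory GRing.Theory Num.Theory.
Local Open Scope ring_scope.

(* A simplex in Q^d is given by the d x (d+1) integer matrix V whose columns
   are its vertices v_0, ..., v_d (in this order). *)
Definition ratM (m n : nat) (V : 'M[int]_(m, n)) : 'M[rat]_(m, n) :=
  map_mx (fun z : int => z%:~R) V.

(* IP lattice simplex: full-dimensional (columns affinely independent) and
   the origin in the interior (a convex combination of the vertices with all
   coefficients strictly positive). *)
Definition IP_simplex (d : nat) (V : 'M[int]_(d, d.+1)) : Prop :=
  (\rank (col_mx (const_mx (1 : rat) : 'M[rat]_(1, d.+1)) (ratM V)) = d.+1)%N /\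
  exists lam : 'cV[rat]_(d.+1),
    (forall j, 0 < lam j 0) /\ \sum_j lam j 0 = 1 /\ ratM V *m lam = 0.

Definition weight (d : nat) (V : 'M[int]_(d, d.+1)) (i : 'I_d.+1) : nat :=
  `|\det (col' i V)|%N.

Definition Qsum (d : nat) (V : 'M[int]_(d, d.+1)) : nat :=
  (\sum_i weight V i)%N.

(* the vertex u_k of the dual: <u_k, v_j> = -1 for all j <> k *)
Definition dual_vertex (d : nat) (V : 'M[int]_(d, d.+1)) (k : 'I_d.+1)
  : 'cV[rat]_d :=
  invmx ((col' k (ratM V))^T) *m const_mx (-1).

Definition int_vec (d : nat) (u : 'cV[rat]_d) : Prop :=
  forall i, u i 0 \is a Num.int.

Definition is_local_gor (d : nat) (V : 'M[int]_(d, d.+1)) (k : 'I_d.+1)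
  (gk : nat) : Prop :=
  (0 < gk)%N /\ int_vec (gk%:R *: dual_vertex V k) /\
  forall n : nat, (0 < n)%N -> int_vec (n%:R *: dual_vertex V k) -> (gk <= n)%N.

(* alpha_i = g |Q_Delta| / q_i  (an integer, see the paper) *)
Definition alpha (d : nat) (V : 'M[int]_(d, d.+1)) (g : nat) (i : 'I_d.+1)
  : nat := ((g * Qsum V) %/ weight V i)%N.

(* Hypotheses (i)-(iii) of the construction, for P = [v_0 ... v_d] with
   0-based indices: rows i : 'I_d (row i+1 of the paper), columns
   j : 'I_(d+1) (column j+1 of the paper, i.e. vertex v_j);
   a_{i+1,k+1} = P i k for k < d, and b_{i+1} = - P i d. *)
Definition construction_hyps (d : nat) (A : 'I_d.+1 -> nat)
  (P : 'M[int]_(d, d.+1)) : Prop :=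
  let col := fun k : 'I_d => widen_ord (leqnSn d) k in
  let w := fun i : 'I_d.+1 => ((\big[lcmn/1%N]_(j < d.+1) A j) %/ A i)%N in
  (forall i k : 'I_d, (k < i)%N -> P i (col k) = 0) /\
  (forall k : 'I_d, 1 <= P k (col k) /\ (P k (col k) %| (A (col k))%:Z)%Z) /\
  (forall i k : 'I_d, (i < k)%N -> 0 <= P i (col k) < P k (col k)) /\
  (forall k : 'I_d,
     (- P k ord_max) * (w ord_max)%:Z =
     \sum_(j < d | (k <= j)%N) P k (col j) * (w (col j))%:Z).

(* Main.v *)
Require Import Defs.
From HB Require Import structures.
From mathcomp Require Import all_boot all_order fingroup perm all_algebra.
From mathcomp Require Import zify.
Import Order.TTheory GRing.Theory Num.Theory.
Local Open Scope ring_scope.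



Lemma col_gcd n (x : 'cV[int]_(1 + n)) : x != 0 ->
  exists U : 'M[int]_(1 + n), U \in unitmx /\
    exists c : int, 0 < c /\ U *m x = col_mx c%:M 0.
Proof.
move=> nzx.
have [L uL [R uR [ds _ dM]]] := int_Smith_normal_form x.
pose c := ds`_0 * R 0 0.
have Ex : invmx L *m x = col_mx c%:M 0.
  rewrite dM !mulmxA mulVmx // mul1mx.
  apply/matrixP => i j; rewrite [j]ord1 !mxE big_ord1 !mxE.
  case: (split_ordP i) => i' ->; rewrite ?col_mxEu ?col_mxEd !mxE.
    by rewrite [i']ord1 /= mulr1n.
  by rewrite /= mulr0n mul0r.
have nzc : c != 0.
  apply: contraNneq nzx => c0.
  rewrite -(mulKVmx uL x) Ex c0.
  have -> : (0 : int)%:M = 0 :> 'M_1 by apply/matrixP=> i j; rewrite !mxE mul0rn.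
  by rewrite col_mx0 mulmx0.
pose s : int := if c < 0 then -1 else 1.
exists (s *: invmx L); split.
  rewrite unitmxZ ?unitmx_inv //.
  by rewrite /s; case: ifP => _; rewrite ?unitrN1 ?unitr1.
exists (s * c); split.
  rewrite /s; case: ifP => hc; first by rewrite mulN1r oppr_gt0.
  by rewrite mul1r lt_def nzc /= leNgt hc.
by rewrite -scalemxAl Ex scale_col_mx scaler0 scale_scalar_mx.
Qed.



Lemma reduce_row n (H : 'M[int]_n) (r : 'rV[int]_n) :
  (forall i k : 'I_n, (k < i)%N -> H i k = 0) -> (forall k, 0 < H k k) ->
  exists t : 'rV[int]_n, forall k, 0 <= (r - t *m H) 0 k < H k k.
Proof.
elim: n H r => [|n IH] H r Hl Hd; first by exists 0; case.
rewrite -[n.+1]/(1 + n)%N in H r Hl Hd *.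
pose h := H (lshift n ord0) (lshift n ord0).
pose t0 : int := ((r ord0 (lshift n ord0)) %/ h)%Z.
pose r' := rsubmx r - t0 *: ursubmx H.
have [||t' Ht'] := IH (drsubmx H) r'.
- by move=> i k ki; rewrite !mxE Hl.
- by move=> k; rewrite !mxE Hd.
exists (row_mx t0%:M t') => k.
have Hdl : dlsubmx H = 0.
  by apply/matrixP => i j; rewrite !mxE Hl //= [j]ord1.
have E : r - row_mx t0%:M t' *m H =
    row_mx (lsubmx r - t0 *: ulsubmx H) (r' - t' *m drsubmx H).
  rewrite -{1}[H]submxK -{1}[r]hsubmxK mul_row_block Hdl mulmx0 addr0.
  by rewrite opp_row_mx add_row_mx !mul_scalar_mx /r' opprD addrA.
rewrite E.
case: (split_ordP k) => k' ->.
  rewrite row_mxEl [k']ord1 !mxE -/h.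
  have hp : 0 < h by apply: Hd.
  have := divz_eq (r ord0 (lshift n ord0)) h.
  rewrite -/t0 => E2.
  have -> : r ord0 (lshift n ord0) - t0 * h = (r ord0 (lshift n ord0) %% h)%Z.
    by rewrite {1}E2 addrC addKr.
  by rewrite ltz_pmod // andbT modz_ge0 // gt_eqF.
rewrite row_mxEr.
have EE : drsubmx H k' k' = H (rshift 1 k') (rshift 1 k').
  by rewrite !mxE.
by rewrite -EE; apply: Ht'.
Qed.



Definition is_hnf {n} (P : 'M[int]_n) :=
  [/\ (forall i k : 'I_n, (k < i)%N -> P i k = 0),
      (forall k, 0 < P k k) &
      (forall i k : 'I_n, (i < k)%N -> 0 <= P i k < P k k)].

Lemma hnf_exists n (M : 'M[int]_n) : \det M != 0 ->
  exists U : 'M[int]_n, U \in unitmx /\ is_hnf (U *m M).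
Proof.
elim: n M => [|n IH] M dM.
  by exists 1; split; [exact: unitmx1 | split; case].
rewrite -[n.+1]/(1 + n)%N in M dM *.
have nzx : lsubmx M != 0.
  apply: contraNneq dM => x0.
  rewrite (expand_det_col M (lshift n ord0)) big1 // => i _.
  have -> : M i (lshift n ord0) = lsubmx M i ord0 by rewrite mxE.
  by rewrite x0 mxE mul0r.
have [U1 [uU1 [c [cp Ec]]]] := @col_gcd _ _ nzx.
pose Y := U1 *m rsubmx M.
have EM1 : U1 *m M = block_mx c%:M (usubmx Y) 0 (dsubmx Y).
  by rewrite -{1}[M]hsubmxK mul_mx_row Ec block_mxEh -/Y vsubmxK.
pose M' := dsubmx Y.
have dM' : \det M' != 0.
  have : \det (U1 *m M) != 0.
    rewrite det_mulmx mulf_neq0 //.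
    by move: uU1; rewrite unitmxE; apply: contraTneq => ->; rewrite unitr0.
  by rewrite EM1 det_ublock; apply: contraNneq => ->; rewrite mulr0.
have [U' [uU' [Hl Hd Hu]]] := IH M' dM'.
pose H' := U' *m M'.
have [t Ht] := @reduce_row _ _ (usubmx Y) Hl Hd.
exists (block_mx 1 (- t) 0 1 *m block_mx 1 0 0 U' *m U1); split.
  rewrite !unitmx_mul uU1 andbT.
  by rewrite !unitmxE !det_ublock !det1 !mul1r unitr1.
have EF : block_mx 1 (- t) 0 1 *m block_mx 1 0 0 U' *m U1 *m M =
    block_mx c%:M (usubmx Y - t *m H') 0 H'.
  rewrite -!mulmxA EM1 !mulmx_block.
  rewrite !(mul1mx, mul0mx, mulmx0, addr0, add0r).
  by rewrite mulNmx.
rewrite EF; split.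
- move=> i k; case: (split_ordP i) => i' ->; case: (split_ordP k) => k' -> /=.
  + by rewrite [i']ord1 [k']ord1.
  + by move=> h; have := ltn_ord i'; lia.
  + by rewrite block_mxEdl mxE.
  + by rewrite block_mxEdr; apply: Hl.
- move=> k; case: (split_ordP k) => k' ->.
  + by rewrite block_mxEul [k']ord1 mxE mulr1n.
  + by rewrite block_mxEdr.
- move=> i k; case: (split_ordP i) => i' ->; case: (split_ordP k) => k' -> /=.
  + by rewrite [i']ord1 [k']ord1.
  + by rewrite block_mxEdr (block_mxEur c%:M) [i']ord1 => _; apply: Ht.
  + by move=> h; have := ltn_ord k'; lia.
  + by rewrite !block_mxEdr; apply: Hu.
Qed.



Lemma det_ratM n (A : 'M[int]_n) : \det (ratM A) = (\det A)%:~R.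
Proof. by rewrite /ratM (det_map_mx intr). Qed.

Lemma bary d (V : 'M[int]_(d, d.+1)) : IP_simplex V ->
  (forall j, (0 < weight V j)%N) /\
  (forall r, \sum_j V r j * (weight V j)%:Z = 0).
Proof.
case=> rk [lam [lpos [lsum lV]]].
pose Vr := ratM V.
pose Mr : 'M[rat]_(d.+1) := col_mx (const_mx 1 : 'M_(1, d.+1)) Vr.
have uM : Mr \in unitmx by rewrite -row_free_unit /row_free rk.
pose D := \det Mr.
have nzD : D != 0 by rewrite -unitfE -unitmxE.
have Mr0 : forall j, Mr 0 j = 1.
  move=> j; rewrite /Mr mxE; case: (@splitP 1 d _) => k hk.
    by rewrite mxE.
  by move: hk => /=; lia.
have MrL : forall i j, Mr (lift 0 i) j = Vr i j.
  move=> i j; rewrite /Mr mxE; case: (@splitP 1 d _) => k hk.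
    by move: hk; rewrite /= /bump /=; have := ltn_ord k; lia.
  congr (Vr _ j); apply: val_inj; move: hk; rewrite /= /bump /=; lia.
have Ml : Mr *m lam = delta_mx 0 0.
  apply/matrixP => i j; rewrite [j]ord1 !mxE.
  case: (unliftP 0 i) => [i'|] ->.
    rewrite eq_sym (negPf (neq_lift _ _)) /=.
    transitivity ((ratM V *m lam) i' 0); last by rewrite lV mxE.
    by rewrite mxE; apply: eq_bigr => k _; rewrite MrL.
  rewrite eqxx /= -lsum; apply: eq_bigr => k _.
  by rewrite Mr0 mul1r.
have key : forall i, \adj Mr i 0 = D * lam i 0.
  move=> i.
  have := congr1 (fun X : 'cV[rat]_(d.+1) => X i 0) (mulmxA (\adj Mr) Mr lam).
  rewrite Ml mul_adj_mx -colE mxE => ->.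
  by rewrite mul_scalar_mx mxE.
have cof : forall i, \adj Mr i 0 = (-1) ^+ i * (\det (col' i V))%:~R.
  move=> i; rewrite mxE /cofactor add0n -det_ratM.
  congr (_ * \det _); apply/matrixP => a b.
  by rewrite [LHS]mxE [LHS]mxE MrL !mxE.
have wq : forall j, (weight V j)%:R = `|D| * lam j 0.
  move=> j; rewrite /weight natr_absz intr_norm.
  have := cof j; rewrite key => E.
  have -> : (\det (col' j V))%:~R = (-1) ^+ j * (D * lam j 0) :> rat.
    by rewrite E signrMK.
  by rewrite normrM normrX normrN normr1 expr1n mul1r normrM (gtr0_norm (lpos j)).
split.
  move=> j; have := wq j.
  have : 0 < `|D| * lam j 0 by rewrite mulr_gt0 ?normr_gt0.
  move=> h1 h2; rewrite -h2 in h1; rewrite ltr0n in h1; exact: h1.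
have hn : forall n : nat, (n%:Z)%:~R = n%:R :> rat by [].
move=> r; apply: (@intr_inj rat); rewrite rmorph_sum rmorph0 /=.
transitivity (`|D| * (ratM V *m lam) r 0); last by rewrite lV mxE mulr0.
rewrite mxE mulr_sumr; apply: eq_bigr => j _.
by rewrite rmorphM /= hn wq [ratM V r j]mxE mulrCA.
Qed.



Lemma dual_int d (V : 'M[int]_(d, d.+1)) (g gk : nat) (k : 'I_d.+1) :
  (0 < weight V k)%N -> is_local_gor V k gk -> (gk %| g)%N ->
  exists Phi : 'rV[int]_d, forall j, j != k -> (Phi *m V) 0 j = - g%:Z.
Proof.
move=> wk [gkp [ivec _]] /dvdnP [m ->].
pose u := dual_vertex V k.
pose A := col' k (ratM V).
have EA : A = ratM (col' k V) by rewrite /A /ratM map_col'.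
have uA : A^T \in unitmx.
  rewrite unitmx_tr unitmxE unitfE EA det_ratM intr_eq0 -absz_gt0; exact: wk.
have Au : A^T *m u = const_mx (-1) by rewrite /u /dual_vertex -/A mulKVmx.
have iv : forall i, ((m * gk)%:R *: u) i 0 \is a Num.int.
  move=> i; rewrite natrM -scalerA mxE; apply: rpredM; first exact: natr_int.
  exact: ivec.
have [z Hz] : exists z : 'I_d -> int,
    forall i, ((m * gk)%:R *: u) i 0 = (z i)%:~R.
  apply: (@fin_all_exists _ (fun _ => int)
    (fun i zi => ((m * gk)%:R *: u) i 0 = zi%:~R)) => i.
  exact/intrP.
exists (\row_i z i) => j nj.
case: (unliftP k j) nj => [j'|] ->; last by rewrite eqxx.
move=> _; apply: (@intr_inj rat).
rewrite mxE rmorph_sum /= rmorphN /=.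
transitivity ((m * gk)%:R * (A^T *m u) j' 0).
  rewrite mxE mulr_sumr; apply: eq_bigr => i _.
  rewrite rmorphM /= mxE -Hz [in LHS]mxE /A !mxE.
  by rewrite mulrAC -mulrA.
rewrite (_ : A^T *m u = const_mx (-1)); last exact: Au.
by rewrite mxE mulrN1.
Qed.



Theorem proposition5p2 (d : nat) (V : 'M[int]_(d, d.+1)) (g : nat)
  (gs : 'I_d.+1 -> nat) :
  (2 <= d)%N ->
  IP_simplex V ->
  (forall k, is_local_gor V k (gs k)) ->
  g = (\big[lcmn/1%N]_(k < d.+1) gs k)%N ->
  exists (s : 'S_d.+1) (U : 'M[int]_d) (P : 'M[int]_(d, d.+1)),
    U \in unitmx /\
    P = U *m col_perm s V /\
    construction_hyps (alpha (col_perm s V) g) P.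
Proof.
move=> _ ip lg gdef.
have [wpos bar] := @bary _ _ ip.
have gpos : (0 < g)%N.
  rewrite gdef; apply: (big_ind (fun x => 0 < x)%N) => //.
    by move=> x y hx hy; rewrite lcmn_gt0 hx hy.
  by move=> k _; case: (lg k).
have gsd : forall k, (gs k %| g)%N.
  by move=> k; rewrite gdef; apply: (biglcmn_sup k).
have [Ph HPh] : exists Ph : 'I_d.+1 -> 'rV[int]_d,
    forall k j, j != k -> (Ph k *m V) 0 j = - g%:Z.
  apply: (@fin_all_exists _ (fun _ => 'rV[int]_d)
    (fun k Phi => forall j, j != k -> (Phi *m V) 0 j = - g%:Z)) => k.
  exact: (@dual_int _ _ _ _ _ (wpos k) (lg k) (gsd k)).
pose e k := (Ph k *m V) 0 k.
set Q := Qsum V.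
have F3 : forall k, (weight V k)%:Z * (e k + g%:Z) = (g * Q)%N%:Z.
  move=> k.
  have S0 : \sum_j (weight V j)%:Z * (Ph k *m V) 0 j = 0.
    rewrite (eq_bigr (fun j => \sum_i Ph k 0 i * (V i j * (weight V j)%:Z))).
      by rewrite exchange_big big1 // => i _; rewrite -mulr_sumr bar mulr0.
    move=> j _; rewrite mxE mulr_sumr; apply: eq_bigr => i _.
    by rewrite mulrCA; congr (_ * _); rewrite mulrC.
  rewrite (bigD1 k) //= (eq_bigr (fun j => (weight V j)%:Z * - g%:Z)) in S0;
    last by move=> j jk; rewrite HPh.
  rewrite -mulr_suml in S0.
  rewrite /Q /Qsum (bigD1 k) //= PoszM PoszD.
  rewrite (big_morph Posz PoszD (erefl 0%:Z)).
  rewrite -/(e k) in S0.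
  move: S0; set s := \sum_(i | i != k) (weight V i)%:Z; set q := (weight V k)%:Z.
  move=> S0; nia.
have Qpos : (0 < Q)%N.
  rewrite /Q /Qsum (bigD1 ord0) //=; have := wpos ord0; lia.
have apos : forall k, [/\ (0 < alpha V g k)%N, ((alpha V g k)%:Z = e k + g%:Z) &
    ((alpha V g k * weight V k)%N = (g * Q)%N)].
  move=> k; have := F3 k; have := wpos k; have gQ : (0 < g * Q)%N by rewrite muln_gt0 gpos.
  move=> wk E.
  have ep : 0 < e k + g%:Z.
    move: E gQ wk; set x := e k + g%:Z; set q := weight V k; set y := (g * Q)%N.
    move=> E gQ wk; nia.
  have hA : (absz (e k + g%:Z)%R)%:Z = e k + g%:Z by rewrite gez0_abs // ltW.
  have -> : alpha V g k = absz (e k + g%:Z)%R.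
    rewrite /alpha -/Q.
    move: (wpos k) E; generalize (weight V k) => w wp E.
    have -> : (g * Q)%N = (w * absz (e k + g%:Z)%R)%N.
      by apply/eqP; rewrite -eqz_nat !PoszM hA E.
    by rewrite mulKn.
  split => //; first by rewrite absz_gt0 gt_eqF.
  by apply/eqP; rewrite -eqz_nat PoszM hA mulrC E.
pose M0 := col' ord_max V.
have dM0 : \det M0 != 0 by rewrite -absz_gt0; exact: wpos.
have [U [uU [Hl Hd Hu]]] := @hnf_exists _ M0 dM0.
pose H := U *m M0.
pose P := U *m V.
pose col := fun k : 'I_d => widen_ord (leqnSn d) k.
have PE : forall i j, P i (col j) = H i j.
  move=> i j; rewrite !mxE; apply: eq_bigr => l _; rewrite mxE.
  by congr (_ * V l _); apply: val_inj; rewrite /= /bump leqNgt ltn_ord.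
have colmax : forall j, col j != ord_max.
  by move=> j; rewrite -val_eqE /= neq_ltn ltn_ord.
exists 1%g, U, P; split => //; rewrite col_perm1; split => //.
split; [|split; [|split]].
- by move=> i k ki; rewrite PE; apply: Hl.
- move=> k; rewrite PE; split; first exact: (Hd k).
  have -> : widen_ord (leqnSn d) k = col k by [].
  pose psi := Ph (col k) - Ph ord_max.
  have subE : forall (A B : 'rV[int]_(d.+1)) j, (A - B) 0 j = A 0 j - B 0 j.
    by move=> A B j; rewrite !mxE.
  have psiV : forall j, j != col k -> j != ord_max -> (psi *m V) 0 j = 0.
    by move=> j h1 h2; rewrite mulmxBl subE (HPh _ _ h1) (HPh _ _ h2) subrr.
  have psik : (psi *m V) 0 (col k) = (alpha V g (col k))%:Z.
    rewrite mulmxBl subE (HPh ord_max) ?colmax // opprK.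
    by case: (apos (col k)) => _ -> _.
  pose psi' := psi *m invmx U.
  have HE : forall j, (psi' *m H) 0 j = (psi *m V) 0 (col j).
    move=> j; rewrite (_ : psi *m V = psi' *m P); last first.
      by rewrite /psi' /P mulmxA mulmxKV.
    rewrite [LHS]mxE [RHS]mxE; apply: eq_bigr => i _; by rewrite PE.
  have Z : forall n (j : 'I_d), (j < n)%N -> (j < k)%N -> psi' 0 j = 0.
    elim=> [|n IHn] j // jn jk.
    have : (psi' *m H) 0 j = 0.
      rewrite HE psiV ?colmax //.
      by rewrite -val_eqE /= neq_ltn jk.
    rewrite [LHS]mxE (bigD1 j) //= big1 ?addr0.
      by move/eqP; rewrite mulf_eq0 (gt_eqF (Hd j)) orbF => /eqP.
    move=> i ij; case: (ltngtP i j) => [ilt|igt|ieq].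
    + by rewrite (IHn i) ?mul0r //; lia.
    + by rewrite Hl ?mulr0.
    + by move/eqP: ij; case; apply: val_inj.
  rewrite -psik -HE [X in (_ %| X)%Z]mxE (bigD1 k) //= big1 ?addr0.
    by apply: dvdz_mull; apply: dvdzz.
  move=> i ik; case: (ltngtP i k) => [ilt|igt|ieq].
  + by rewrite (Z k) ?mul0r.
  + by rewrite Hl ?mulr0.
  + by move/eqP: ik; case; apply: val_inj.
- by move=> i k ik; rewrite !PE; apply: Hu.
- move=> k /=.
  set L := \big[lcmn/1%N]_(j < d.+1) alpha V g j.
  have wE : forall i, ((L %/ alpha V g i) * (g * Q))%N = (L * weight V i)%N.
    move=> i; case: (apos i) => ap _ aw.
    rewrite -aw mulnA divnK //; exact: (biglcmn_sup i).
  have wEz : forall i,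
      (L %/ alpha V g i)%N%:Z * (g * Q)%N%:Z = L%:Z * (weight V i)%:Z.
    by move=> i; rewrite -!PoszM wE.
  have rowP : \sum_j P k j * (weight V j)%:Z = 0.
    rewrite (eq_bigr (fun j => \sum_l U k l * (V l j * (weight V j)%:Z)));
      last by move=> j _; rewrite mxE mulr_suml; apply: eq_bigr => l _; rewrite mulrA.
    by rewrite exchange_big big1 // => l _; rewrite -mulr_sumr bar mulr0.
  rewrite big_ord_recr /= in rowP.
  have rowP' : \sum_(j < d | (k <= j)%N) P k (col j) * (weight V (col j))%:Z
      + P k ord_max * (weight V ord_max)%:Z = 0.
    rewrite -[RHS]rowP; congr (_ + _).
    rewrite [RHS](bigID (fun j : 'I_d => (k <= j)%N)) /= [X in _ = _ + X]big1 ?addr0 //.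
    by move=> j; rewrite -ltnNge => jk; rewrite PE Hl ?mul0r.
  have nzgQ : (g * Q)%N%:Z != 0 by rewrite eqz_nat muln_eq0 negb_or -!lt0n gpos Qpos.
  apply: (mulIf nzgQ).
  rewrite mulr_suml -mulrA wEz.
  rewrite (eq_bigr (fun j => L%:Z * (P k (col j) * (weight V (col j))%:Z)));
    last by move=> j _; rewrite -mulrA wEz mulrCA.
  rewrite -mulr_sumr.
  have -> : \sum_(j < d | (k <= j)%N) P k (col j) * (weight V (col j))%:Z
      = - (P k ord_max * (weight V ord_max)%:Z).
    by apply/eqP; rewrite -addr_eq0 rowP'.
  by rewrite mulNr mulrN mulrCA.
Qed.
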